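(* Let $Z$ be a decision structure and $P$ a modular partition of $N(Z)$. Then the quotient $Z/P$ is a decision structure (in particular it is acyclic, has a unique source, and no two arcs leaving the same node share a label; and there is at most one arc between any ordered pair of blocks). Moreover, if $P$ is a maximal partition, then $Z/P$ is prime.
   Context: A decision structure is a finite directed acyclic graph $Z=(N,A)$, $A\subseteq N\times N$, with a unique source (node with no incoming arc), together with an arc labelling $\ell:A\to\mathcal{R}$ (into a set $\mathcal{R}$ of return values) and a node labelling by actions, such that distinct arcs leaving the same node have distinct labels; the arc out of $v$ labelled $r$, if it exists, is the $r$-arc out of $v$. For $X\subseteq N$, $Z[X]$ is the induced subgraph with inherited labels. A subset $X\subseteq N(Z)$ is a module of $Z$ if $Z[X]$ has a unique source (so is a decision structure) and for every node $v\notin X$: (i) every arc from $v$ to a node of $X$ ends at the source of $Z[X]$; (ii) if for some $x\in X$ there is an arc from $x$ to $v$ labelled $r$, then every $x'\in X$ has an $r$-arc, and this arc ends either at $v$ or at a node of $X$. The modules $N(Z)$ and $\{v\}$ ($v\in N(Z)$) are trivial; $Z$ is prime if all its modules are trivial. A module is maximal if it is a proper subset of $N(Z)$ and is contained in no module other than itself and $N(Z)$. A modular partition is a partition of $N(Z)$ all of whose blocks are modules; it is a maximal partition if all blocks are maximal modules. For a partition $P$ of $N(Z)$, the quotient $Z/P$ is the arc-labelled graph with node set $P$ having an arc $(S,T)$, $S\neq T$, labelled $r$ whenever some arc labelled $r$ goes from a node of $S$ to a node of $T$ (node labels of the quotient are immaterial here). The graphs $Z[S]$, $S\in P$, are the factors.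 *)

(* Defs.v *)
From Stdlib Require Import Relations.
From mathcomp Require Import all_boot.
Set Implicit Arguments. Unset Strict Implicit. Unset Printing Implicit Defensive.

Section DecisionStructures.
Variables (T : finType) (R : Type).

(* A labelled graph is given by a vertex set [N : {set T}] and a labelled-arc
   relation [arc u v r] ("there is an arc from u to v labelled r").  All
   notions below concern the graph induced on [N] (arcs with both ends in N). *)
Implicit Types (N X : {set T}) (arc : T -> T -> R -> Prop).

Definition edgeIn N arc (u v : T) : Prop :=
  u \in N /\ v \in N /\ exists r, arc u v r.

Definition is_source N arc (s : T) : Prop :=
  s \in N /\ forall u r, u \in N -> ~ arc u s r.

(* decision structure on N (node labels by actions are immaterial here) *)
Definition decision_structure N arc : Prop :=
  [/\ (* at most one arc (hence one label) between an ordered pair *)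
      (forall u v r r', u \in N -> v \in N -> arc u v r -> arc u v r' -> r = r'),
      (forall u v v' r, u \in N -> v \in N -> v' \in N ->
          arc u v r -> arc u v' r -> v = v'),
      (forall u, u \in N -> ~ clos_trans T (edgeIn N arc) u u) &
      (exists! s, is_source N arc s)].

Definition is_module N arc X : Prop :=
  X \subset N /\
  exists s, (unique (is_source X arc) s) /\
   (forall v x r, v \in N -> v \notin X -> x \in X -> arc v x r -> x = s) /\
   (forall v x r, v \in N -> v \notin X -> x \in X -> arc x v r ->
      forall x', x' \in X -> exists w, w \in N /\ arc x' w r /\ (w = v \/ w \in X)).

Definition is_prime N arc : Prop :=
  forall X, is_module N arc X -> X = N \/ exists v, v \in N /\ X = [set v].

Definition maximal_module N arc X : Prop :=
  is_module N arc X /\ X \proper N /\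
  forall Y, is_module N arc Y -> X \subset Y -> Y = X \/ Y = N.

Definition modular_partition N arc (P : {set {set T}}) : Prop :=
  partition P N /\ forall S, S \in P -> is_module N arc S.

Definition maximal_partition N arc (P : {set {set T}}) : Prop :=
  partition P N /\ forall S, S \in P -> maximal_module N arc S.

Definition quotient_arc (P : {set {set T}}) arc (S S' : {set T}) (r : R) : Prop :=
  S \in P /\ S' \in P /\ S != S' /\ exists u v, u \in S /\ v \in S' /\ arc u v r.

End DecisionStructures.

(* Main.v *)
Require Import Defs.
From Stdlib Require Import Relations ClassicalEpsilon Classical.
From mathcomp Require Import all_boot.
Set Implicit Arguments. Unset Strict Implicit.

Definition pb (Q : Prop) : bool := if excluded_middle_informative Q then true else false.
Lemma pbP (Q : Prop) : reflect Q (pb Q).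
Proof. rewrite /pb; case: excluded_middle_informative => h; by constructor. Qed.

Section Q.
Variables (V : finType) (R : Type) (arc : V -> V -> R -> Prop) (P : {set {set V}}).
Hypothesis DS : decision_structure [set: V] arc.
Hypothesis PP : partition P [set: V].

Let E := edgeIn [set: V] arc.

Lemma acyc u : ~ clos_trans V E u u.
Proof. by case: DS => _ _ h _; apply: h; rewrite in_setT. Qed.
Lemma E_arc u v r : arc u v r -> E u v.
Proof. by move=> h; split; [|split]; rewrite ?in_setT //; exists r. Qed.
Lemma uniq_lab u v r r' : arc u v r -> arc u v r' -> r = r'.
Proof. by case: DS => h _ _ _; apply: h; rewrite in_setT. Qed.
Lemma uniq_tgt u v v' r : arc u v r -> arc u v' r -> v = v'.
Proof. by case: DS => _ h _ _; apply: h; rewrite in_setT. Qed.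

Definition reach u := [set x | pb (clos_trans V E u x)].
Definition breach x := [set y | pb (clos_trans V E y x)].

Lemma F_lt u v : E u v -> #|reach v| < #|reach u|.
Proof.
move=> e; apply: proper_card; apply/properP; split.
  apply/subsetP=> x; rewrite !inE => /pbP h; apply/pbP; exact: t_trans (t_step _ _ _ _ e) h.
exists v; rewrite inE; first by apply/pbP; exact: t_step.
by apply/pbP; apply: acyc.
Qed.
Lemma G_lt u v : E u v -> #|breach u| < #|breach v|.
Proof.
move=> e; apply: proper_card; apply/properP; split.
  apply/subsetP=> x; rewrite !inE => /pbP h; apply/pbP; exact: t_trans h (t_step _ _ _ _ e).
exists u; rewrite inE; first by apply/pbP; exact: t_step.
by apply/pbP; apply: acyc.
Qed.
Lemma ct_lt (A : Type) (g : A -> nat) (Q : A -> A -> Prop) :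
  (forall x y, Q x y -> g y < g x) -> forall x y, clos_trans _ Q x y -> g y < g x.
Proof. move=> h x y; elim => // a b c _ h1 _ h2; exact: ltn_trans h2 h1. Qed.

Lemma sink (S : {set V}) a : a \in S -> exists2 t, t \in S & forall w r, w \in S -> ~ arc t w r.
Proof.
move=> aS; case: (arg_minnP (fun i => #|reach i|) aS) => t tS tmin.
exists t => // w r wS h; have := tmin w wS; have := F_lt (E_arc h).
by rewrite ltnNge => /negP.
Qed.

Lemma from_source (S : {set V}) s : unique (is_source S arc) s ->
  forall x, x \in S -> x = s \/ clos_trans V E s x.
Proof.
move=> [_ us] x xS.
suff H : forall n x, #|breach x| < n -> x \in S -> x = s \/ clos_trans V E s x.
  exact: (H _ x (ltnSn _) xS).
elim=> [|n IH] {}x // hx {}xS.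
have [->|nxs] := eqVneq x s; first by left.
right.
have : ~ is_source S arc x by move=> h; move/eqP: nxs; apply; symmetry; exact: us.
move=> /not_and_or [/(_ xS) []|/not_all_ex_not [u /not_all_ex_not [r /(@imply_to_and (u \in S)) [uS /NNPP h]]]].
have eux := E_arc h.
case: (IH u _ uS).
- exact: leq_trans (G_lt eux) _.
- by move=> <-; exact: t_step.
by move=> hs; exact: t_trans hs (t_step _ _ _ _ eux).
Qed.

Lemma blk_in x : pblock P x \in P.
Proof. by case/and3P: PP => /eqP cov _ _; apply: pblock_mem; rewrite cov in_setT. Qed.
Lemma in_blk x : x \in pblock P x.
Proof. by case/and3P: PP => /eqP cov _ _; rewrite mem_pblock cov in_setT. Qed.
Lemma blk_eq B x : B \in P -> x \in B -> pblock P x = B.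
Proof. by case/and3P: PP => _ triv _; apply: def_pblock. Qed.
Lemma blk_uniq B1 B2 x : B1 \in P -> B2 \in P -> x \in B1 -> x \in B2 -> B1 = B2.
Proof. by move=> h1 h2 x1 x2; rewrite -(blk_eq h1 x1) (blk_eq h2 x2). Qed.
Lemma notin_other B1 B2 x : B1 \in P -> B2 \in P -> B1 != B2 -> x \in B2 -> x \notin B1.
Proof. by move=> h1 h2 ne x2; apply/negP => x1; move/eqP: ne; apply; exact: blk_uniq x1 x2. Qed.
Lemma blk_ne0 B : B \in P -> exists x, x \in B.
Proof. by case/and3P: PP => _ _ n0 BP; apply/set0Pn; apply: contraNneq n0 => <-. Qed.

Lemma mod_src X : is_module [set: V] arc X -> exists s, [/\ unique (is_source X arc) s,
  (forall v x r, v \notin X -> x \in X -> arc v x r -> x = s) &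
  (forall v x r, v \notin X -> x \in X -> arc x v r -> forall x', x' \in X ->
      exists w, arc x' w r /\ (w = v \/ w \in X))].
Proof.
case=> _ [s [us [h1 h2]]]; exists s; split => //.
  by move=> v x r; apply: h1; rewrite in_setT.
move=> v x r vX xX a x' x'X; have [w [_ hw]] := h2 v x r (in_setT v) vX xX a x' x'X.
by exists w.
Qed.

Lemma sink_out X t u v r : is_module [set: V] arc X -> t \in X ->
  (forall w r, w \in X -> ~ arc t w r) -> u \in X -> v \notin X -> arc u v r -> arc t v r.
Proof.
move=> /mod_src [s [_ _ h2]] tX snk uX vX a.
have [w [aw [<-//|wX]]] := h2 v u r vX uX a t tX.
by case: (snk w r wX).
Qed.

Hypothesis Hmod : forall S, S \in P -> is_module [set: V] arc S.
Let Q := quotient_arc P arc.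

Lemma q_lab S S' r r' : Q S S' r -> Q S S' r' -> r = r'.
Proof.
move=> [SP [S'P [ne [u [v [uS [vS' a]]]]]]] [_ [_ [_ [u' [v' [u'S [v'S' a']]]]]]].
have [t tS snk] := sink uS.
have [s' [_ h1 _]] := mod_src (Hmod S'P).
have ne' : S' != S by rewrite eq_sym.
have a1 := sink_out (Hmod SP) tS snk uS (notin_other SP S'P ne vS') a.
have a2 := sink_out (Hmod SP) tS snk u'S (notin_other SP S'P ne v'S') a'.
have e1 := h1 _ _ _ (notin_other S'P SP ne' tS) vS' a1.
have e2 := h1 _ _ _ (notin_other S'P SP ne' tS) v'S' a2.
by subst; apply: uniq_lab a1 a2.
Qed.

Lemma q_tgt S S1 S2 r : Q S S1 r -> Q S S2 r -> S1 = S2.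
Proof.
move=> [SP [S1P [ne [u [v [uS [vS a]]]]]]] [_ [S2P [ne2 [u' [v' [u'S [v'S a']]]]]]].
have [t tS snk] := sink uS.
have a1 := sink_out (Hmod SP) tS snk uS (notin_other SP S1P ne vS) a.
have a2 := sink_out (Hmod SP) tS snk u'S (notin_other SP S2P ne2 v'S) a'.
have e := uniq_tgt a1 a2; subst; exact: blk_uniq vS v'S.
Qed.

Definition g (S : {set V}) :=
  if [pick x | pb (unique (is_source S arc) x)] is Some s then #|reach s| else 0.

Lemma g_src S : S \in P -> exists s, unique (is_source S arc) s /\ g S = #|reach s|.
Proof.
move=> SP; rewrite /g; case: pickP => [s /pbP us|none].
  by exists s.
have [s [us _]] := mod_src (Hmod SP).
by move: (none s) => /pbP.
Qed.

Lemma q_dec S S' r : Q S S' r -> g S' < g S.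
Proof.
move=> [SP [S'P [ne [u [v [uS [vS' a]]]]]]].
have [s [us ->]] := g_src SP.
have [s' [us' ->]] := g_src S'P.
have [s'' [us'' h1 _]] := mod_src (Hmod S'P).
have ev := h1 _ _ _ (notin_other S'P SP (ltac:(by rewrite eq_sym)) uS) vS' a.
have e' : s'' = s' by apply: (proj2 us''); exact: (proj1 us').
subst.
have hc : clos_trans V (edgeIn [set: V] arc) s s'.
  case: (from_source us uS) => [<-|hsu]; first exact: t_step (E_arc a).
  exact: t_trans hsu (t_step _ _ _ _ (E_arc a)).
exact: (@ct_lt _ (fun u => #|reach u|) _ F_lt _ _ hc).
Qed.

Lemma part1 : decision_structure P Q.
Proof.
split.
- by move=> u v r r' _ _; apply: q_lab.
- by move=> u v v' r _ _ _; apply: q_tgt.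
- move=> S _ h.
  have : g S < g S.
    apply: (@ct_lt _ g _ _ _ _ h) => x y [_ [_ [r hq]]]; exact: q_dec hq.
  by rewrite ltnn.
case: DS => _ _ _ [z [zs zu]].
have SzP := blk_in z.
have [s0 [us0 h1 _]] := mod_src (Hmod SzP).
have e0 : s0 = z.
  apply: (proj2 us0); split; first exact: in_blk.
  move=> u r _; exact: (proj2 zs) u r (in_setT u).
subst s0.
exists (pblock P z); split.
  split=> // U r UP [_ [_ [ne [u [v [uU [vSz a]]]]]]].
  have ev := h1 _ _ _ (notin_other SzP UP (ltac:(by rewrite eq_sym)) uU) vSz a.
  subst v; exact: (proj2 zs) u r (in_setT u) a.
move=> S' [S'P S'src].
have [s [us _ _]] := mod_src (Hmod S'P).
have [esz|nsz] := eqVneq s z.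
  by subst s; apply: blk_eq S'P (proj1 (proj1 us)).
have : ~ is_source [set: V] arc s by move=> h; move/eqP: nsz; apply; symmetry; exact: zu.
move=> /not_and_or [/(_ (in_setT s)) []|/not_all_ex_not [u /not_all_ex_not [r]]].
move=> /(@imply_to_and (u \in [set: V])) [_ /NNPP a].
have [uS'|uS'] := boolP (u \in S').
  by case: ((proj2 (proj1 us)) u r uS' a).
case: (S'src (pblock P u) r (blk_in u)); split; first exact: blk_in.
split=> //; split.
  by apply/eqP => e; move: uS'; rewrite -e in_blk.
by exists u, s; split; [exact: in_blk | split; [exact: (proj1 (proj1 us)) | ]].
Qed.

Lemma in_U (X : {set {set V}}) x : X \subset P -> (x \in cover X) = (pblock P x \in X).
Proof.
move=> XP; apply/bigcupP/idP => [[B BX xB]|h]; last by exists (pblock P x) => //; exact: in_blk.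
by rewrite (blk_eq (subsetP XP _ BX) xB).
Qed.

Lemma blk_src B t : B \in P -> t \in B -> (forall u r, u \in B -> ~ arc u t r) ->
  forall s, unique (is_source B arc) s -> s = t.
Proof. by move=> BP tB h s [_ us]; apply: us; split. Qed.

Hypothesis Hmax : forall S, S \in P -> maximal_module [set: V] arc S.

Lemma part2 : is_prime P Q.
Proof.
move=> X [XP [S0 [[[S0X S0src] S0u] [qi qii]]]].
have S0P := subsetP XP _ S0X.
have [s [us h1 h2]] := mod_src (Hmod S0P).
have sS0 := proj1 (proj1 us).
have bX x : x \in cover X -> pblock P x \in X by rewrite in_U.
have sU : s \in cover X by rewrite in_U // (blk_eq S0P sS0).
have modU : is_module [set: V] arc (cover X).
  split; first exact: subsetT.
  exists s; split; [split; [split=> // |] | split].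
  - move=> u r uU a; have BX := bX _ uU; have BP := subsetP XP _ BX.
    have [eB|neB] := eqVneq (pblock P u) S0.
      by apply: ((proj2 (proj1 us)) u r _ a); rewrite -eB in_blk.
    apply: (S0src _ r BX); split=> //; split=> //; split=> //.
    by exists u, s; split; [exact: in_blk | split].
  - move=> t [tU tsrc]; have BX := bX _ tU; have BP := subsetP XP _ BX.
    have tsrcB : forall u r, u \in pblock P t -> ~ arc u t r.
      by move=> u r uB; apply: tsrc; rewrite in_U // (blk_eq BP uB).
    have [eB|neB] := eqVneq (pblock P t) S0.
      by apply: (blk_src S0P) us; [rewrite -eB in_blk | rewrite -eB].
    have : ~ is_source X Q (pblock P t) by move=> h; move/eqP: neB; apply; symmetry; exact: S0u.
    move=> /not_and_or [/(_ BX) []|/not_all_ex_not [Y /not_all_ex_not [r]]].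
    move=> /(@imply_to_and (Y \in X)) [YX /NNPP [_ [_ [ne [u [v [uY [vB a]]]]]]]].
    have YP := subsetP XP _ YX.
    have [sB [usB hB1 _]] := mod_src (Hmod BP).
    have ev := hB1 _ _ _ (notin_other BP YP (ltac:(by rewrite eq_sym)) uY) vB a.
    have et := blk_src BP (in_blk t) tsrcB usB.
    move: a; rewrite ev et => a.
    exfalso; apply: (tsrc u r _ a); by rewrite in_U // (blk_eq YP uY).
  - move=> v x r _ vU xU a.
    have BX := bX _ xU; have BP := subsetP XP _ BX.
    have vX : pblock P v \notin X by rewrite -in_U.
    have ne : pblock P v != pblock P x by apply: contraNneq vX => ->.
    have e := qi _ _ r (blk_in v) vX BX (conj (blk_in v) (conj BP (conj ne
       (ex_intro _ v (ex_intro _ x (conj (in_blk v) (conj (in_blk x) a))))))).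
    apply: (h1 v _ _ _ _ a); last by rewrite -e in_blk.
    by apply: contraNN vX => vS0; rewrite (blk_eq S0P vS0).
  - move=> v x r _ vU xU a x' x'U.
    have BX := bX _ xU; have BP := subsetP XP _ BX.
    have vX : pblock P v \notin X by rewrite -in_U.
    have ne : pblock P x != pblock P v by apply: contraNneq vX => <-.
    have X'X := bX _ x'U; have X'P := blk_in x'.
    have [W [WP [[_ [_ [neW [a0 [b [a0X' [bW ab]]]]]]] hW]]] :=
      qii (pblock P v) (pblock P x) r (blk_in v) vX BX (conj BP (conj (blk_in v) (conj ne
       (ex_intro _ x (ex_intro _ v (conj (in_blk x) (conj (in_blk v) a))))))) (pblock P x') X'X.
    have [s' [_ _ hX'3]] := mod_src (Hmod X'P).
    have [w [aw [ew|wX']]] := hX'3 b a0 r (notin_other X'P WP neW bW) a0X' ab x' (in_blk x').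
      subst w; case: hW => [eW|WX].
        subst W.
        have [sB [_ hB1 _]] := mod_src (Hmod (blk_in v)).
        have n1 : pblock P v != pblock P x' by apply: contraNneq vX => ->.
        have eb := hB1 _ _ _ (notin_other (blk_in v) X'P n1 a0X') bW ab.
        have ev := hB1 _ _ _ (notin_other (blk_in v) BP (ltac:(by rewrite eq_sym)) (in_blk x)) (in_blk v) a.
        exists b; split; [exact: in_setT | split=> //]; left; by rewrite eb ev.
      exists b; split; [exact: in_setT | split=> //]; right.
      by rewrite in_U // (blk_eq WP bW).
    exists w; split; [exact: in_setT | split=> //]; right.
    by rewrite in_U // (blk_eq X'P wX').
have [_ [_ mx]] := Hmax S0P.
have S0U : S0 \subset cover X.
  by apply/subsetP => y yS0; rewrite in_U // (blk_eq S0P yS0).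
case: (mx _ modU S0U) => eU.
  right; exists S0; split=> //; apply/setP => B; rewrite inE; apply/idP/eqP => [BX|->//].
  have BP := subsetP XP _ BX; have [y yB] := blk_ne0 BP.
  have yU : y \in cover X by rewrite in_U // (blk_eq BP yB).
  rewrite eU in yU; exact: blk_uniq BP S0P yB yU.
left; apply/eqP; rewrite eqEsubset XP /=; apply/subsetP => B BP.
have [y yB] := blk_ne0 BP.
have : y \in cover X by rewrite eU in_setT.
by rewrite in_U // (blk_eq BP yB).
Qed.
End Q.

Theorem mainTheorem5 (V : finType) (R : Type) (arc : V -> V -> R -> Prop)
    (P : {set {set V}}) :
  decision_structure [set: V] arc ->
  modular_partition [set: V] arc P ->
  decision_structure P (quotient_arc P arc) /\
  (maximal_partition [set: V] arc P -> is_prime P (quotient_arc P arc)).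
Proof.
move=> DS [PP Hmod]; split; first exact: part1.
by move=> [_ Hmax]; apply: part2.
Qed.
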